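(* Let $L,J\ge0$ be integers and let $Q_{\ell,j}(x)$, $0\le\ell\le L$, $0\le j\le J$, be polynomials with nonnegative coefficients. With the allowed weighted paths defined from these polynomials as in the context, set, for $k\ge0$, \[ F_{k,0}(x)=\sum_{n\ge0}\ \sum_{p\in\mathcal P_{n,k}}w(p)\,x^n,\qquad F(x,u)=\sum_{k\ge0}F_{k,0}(x)u^k , \] where $\mathcal P_{n,k}$ is the multiset of allowed paths from $(0,k)$ to $(n,0)$. Then $F(x,u)$ satisfies \[ F(x,u)=1+x\sum_{\ell=0}^L\sum_{j=0}^J Q_{\ell,j}(x)\,u^j\,\Delta^\ell F(x,u), \] and it is the unique formal power series solution of this equation.
   Context: For $G(x,u)=\sum_{k\ge0}G_k(x)u^k$ and $\ell\ge1$, $\Delta^\ell G(x,u)=\sum_{k\ge0}G_{k+\ell}(x)u^k$, and $\Delta^0G=G$. Step model: for each level $h\ge0$, the multiset $\mathcal S_h$ of steps allowed at level $h$ contains, for every triple $(\ell,j,r)$ with $0\le\ell\le L$, $0\le j\le\min(h,J)$, $r\ge0$ and $[x^r]Q_{\ell,j}(x)\ne0$, one (labelled) step with displacement $(1+r,\ell-j)$ and weight $w=[x^r]Q_{\ell,j}(x)$; distinct triples give distinct elements of the multiset even if their displacements coincide. An allowed path starting at level $k$ is a finite sequence $s_1\cdots s_M$ ($M\ge0$) of labelled steps, visiting the points $(0,k),(0,k)+s_1,(0,k)+s_1+s_2,\dots$, such that each step $s_m$ belongs to $\mathcal S_h$ where $h$ is the second coordinate (level) of the point at which $s_m$ starts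 (levels then automatically stay $\ge0$). Its weight is $w(p)=\prod_{m=1}^M w(s_m)$, the empty path having weight $1$. *)

(* Defs.v *)
From HB Require Import structures.
From mathcomp Require Import all_boot all_order all_algebra.
From mathcomp Require Import boolp classical_sets fsbigop.
Set Implicit Arguments. Unset Strict Implicit. Unset Printing Implicit Defensive.
Import Order.TTheory GRing.Theory Num.Theory.
Local Open Scope classical_set_scope.
Local Open Scope ring_scope.

(* A labelled step is a triple (l, j, r): displacement (1 + r, l - j),
   weight [x^r] Q l j. *)
Definition step := (nat * nat * nat)%type.

Section Paths.
Variables (R : numDomainType) (L J : nat) (Q : nat -> nat -> {poly R}).

Definition step_l (s : step) : nat := s.1.1.
Definition step_j (s : step) : nat := s.1.2.
Definition step_r (s : step) : nat := s.2.

Definition step_allowed (h : nat) (s : step) : bool :=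
  [&& (step_l s <= L)%N, (step_j s <= minn h J)%N & (Q (step_l s) (step_j s))`_(step_r s) != 0].

Definition next_level (h : nat) (s : step) : nat := h + step_l s - step_j s.

Fixpoint allowed_path (h : nat) (p : seq step) : bool :=
  if p is s :: p' then step_allowed h s && allowed_path (next_level h s) p'
  else true.

Fixpoint end_level (h : nat) (p : seq step) : nat :=
  if p is s :: p' then end_level (next_level h s) p' else h.

Definition path_xlen (p : seq step) : nat := \sum_(s <- p) (1 + step_r s)%N.

Definition weight (p : seq step) : R :=
  \prod_(s <- p) (Q (step_l s) (step_j s))`_(step_r s).

Definition Paths (n k : nat) : set (seq step) :=
  [set p | allowed_path k p /\ end_level k p = 0%N /\ path_xlen p = n].

(* [x^n] F_{k,0}(x) *)
Definition Fcoef (n k : nat) : R := \sum_(p \in Paths n k) weight p.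

End Paths.

(* Bivariate formal power series: G n k = [x^n u^k] G(x,u). *)
Definition fps2 (R : numDomainType) := nat -> nat -> R.

Section Series.
Variable R : numDomainType.

Definition Fseries (L J : nat) (Q : nat -> nat -> {poly R}) : fps2 R :=
  fun n k => Fcoef L J Q n k.

Definition fps_one : fps2 R := fun n k => ((n == 0%N) && (k == 0%N))%:R.
Definition fps_add (G H : fps2 R) : fps2 R := fun n k => G n k + H n k.
Definition fps_mulx (G : fps2 R) : fps2 R :=
  fun n k => if n is n'.+1 then G n' k else 0.
Definition fps_mulu (j : nat) (G : fps2 R) : fps2 R :=
  fun n k => if (j <= k)%N then G n (k - j)%N else 0.
Definition fps_mulpoly (q : {poly R}) (G : fps2 R) : fps2 R :=
  fun n k => \sum_(i < n.+1) q`_i * G (n - i)%N k.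
(* Delta^l G(x,u) = sum_k G_{k+l}(x) u^k *)
Definition fps_Delta (l : nat) (G : fps2 R) : fps2 R :=
  fun n k => G n (k + l)%N.
Definition fps_sum2 (L J : nat) (T : nat -> nat -> fps2 R) : fps2 R :=
  fun n k => \sum_(l < L.+1) \sum_(j < J.+1) T l j n k.

Definition rhs (L J : nat) (Q : nat -> nat -> {poly R}) (G : fps2 R) : fps2 R :=
  fps_add fps_one
    (fps_mulx (fps_sum2 L J (fun l j => fps_mulpoly (Q l j) (fps_mulu j (fps_Delta l G))))).

Definition solves (L J : nat) (Q : nat -> nat -> {poly R}) (G : fps2 R) : Prop :=
  forall n k, G n k = rhs L J Q G n k.
End Series.

(* Main.v *)
Require Import Defs.
From HB Require Import structures.
From mathcomp Require Import all_boot all_order all_algebra.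
From mathcomp Require Import boolp classical_sets fsbigop.
From mathcomp Require Import zify.
Import Order.TTheory GRing.Theory Num.Theory.
Local Open Scope ring_scope.

Section Proof.
Variables (R : numDomainType) (L J : nat) (Q : nat -> nat -> {poly R}).

Definition allsteps (n : nat) : seq step :=
  [seq (lj, r) | lj <- [seq (l, j) | l <- index_iota 0 L.+1, j <- index_iota 0 J.+1],
                 r <- index_iota 0 n].

Definition steps (k n : nat) : seq step :=
  [seq s <- allsteps n | step_allowed L J Q k s].

Definition base (n k : nat) : seq (seq step) :=
  if (n == 0)%N && (k == 0)%N then [:: [::]] else [::].
Arguments base : simpl never.

Lemma mem_base n k p : (p \in base n k) = (p == [::]) && (n == 0)%N && (k == 0)%N.
Proof. by rewrite /base; case: ifP => h; rewrite ?inE ?h ?andbT //; case: (p == [::]). Qed.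

Fixpoint plist (f n k : nat) : seq (seq step) :=
  base n k ++
  (if f is f'.+1 then
     [seq s :: p | s <- steps k n, p <- plist f' (n - (1 + step_r s))%N (next_level k s)]
   else [::]).

Lemma uniq_cons_pairs (ss : seq step) (t : step -> seq (seq step)) :
  uniq ss -> (forall s, uniq (t s)) -> uniq [seq s :: p | s <- ss, p <- t s].
Proof.
elim: ss => //= s ss IH /andP[sn us] ut.
rewrite cat_uniq IH // andbT map_inj_uniq ?ut //; last by move=> x y [].
apply/hasPn => q /allpairsPdep [x [y [xin _ ->]]]; apply/mapP => -[p _ [ex _]].
by move: xin; rewrite ex (negbTE sn).
Qed.

Lemma allsteps_uniq n : uniq (allsteps n).
Proof.
apply: allpairs_uniq; [|exact: iota_uniq|by move=> [? ?] [? ?] _ _ /= ->].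
apply: allpairs_uniq; [exact: iota_uniq|exact: iota_uniq|by move=> [? ?] [? ?] _ _ /= ->].
Qed.

Lemma plist_uniq f n k : uniq (plist f n k).
Proof.
elim: f n k => [|f IH] n k /=; first by rewrite cats0 /base; case: ifP.
rewrite cat_uniq; apply/and3P; split.
- by rewrite /base; case: ifP.
- by apply/hasPn => q /allpairsPdep [? [? [_ _ ->]]]; rewrite mem_base.
- apply: (@uniq_cons_pairs _ (fun s => plist f (n - (1 + step_r s)) (next_level k s))) => //.
  by apply: filter_uniq; apply: allsteps_uniq.
Qed.

Lemma mem_steps k n s :
  (s \in steps k n) = step_allowed L J Q k s && (step_r s < n)%N.
Proof.
case: s => [[l j] r]; rewrite mem_filter /=; case A: step_allowed => //=.
move: A; rewrite /step_allowed /step_l /step_j /step_r /= => /and3P[lL jk _].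
apply/allpairsP/idP => [[[[l' j'] r'] [_ ]]|rn].
  by rewrite mem_index_iota => /andP[_ ?] [_ _ ->].
exists ((l, j), r); split => //; last by rewrite mem_index_iota.
apply/allpairsP; exists (l, j); rewrite !mem_index_iota /=; split => //.
by rewrite ltnS (leq_trans jk) // geq_minr.
Qed.

Lemma xlen_cons s p : path_xlen (s :: p) = (1 + step_r s + path_xlen p)%N.
Proof. by rewrite /path_xlen big_cons. Qed.

Lemma mem_cons_pairs (ss : seq step) (t : step -> seq (seq step)) s p :
  (s :: p \in [seq s' :: p' | s' <- ss, p' <- t s']) = (s \in ss) && (p \in t s).
Proof.
apply/allpairsPdep/andP => [[x [y [xin yin [-> ->]]]] | [h1 h2]]; first by split.
by exists s, p.
Qed.

Lemma nil_cons_pairs (ss : seq step) (t : step -> seq (seq step)) :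
  ([::] \in [seq s' :: p' | s' <- ss, p' <- t s']) = false.
Proof. by apply/allpairsPdep => [[? [? [_ _ //]]]]. Qed.

Lemma mem_plist f n k p : (n <= f)%N ->
  (p \in plist f n k) =
  [&& allowed_path L J Q k p, end_level k p == 0%N & path_xlen p == n].
Proof.
elim: f n k p => [|f IH] n k p nf; rewrite /= mem_cat mem_base.
  case: p => [|s p] /=.
    by rewrite /path_xlen big_nil in_nil orbF andbC eq_sym; case: k; case: n nf.
  rewrite xlen_cons.
  have -> : ((1 + step_r s + path_xlen p)%N == n) = false by apply/eqP; lia.
  by rewrite !andbF.
case: p => [|x q] /=.
  by rewrite nil_cons_pairs orbF /path_xlen big_nil andbC eq_sym; case: k; case: n nf.
rewrite mem_cons_pairs mem_steps IH; last by lia.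
rewrite /= xlen_cons.
case: step_allowed => //=; case: allowed_path => //=; case: (end_level (next_level k x) q == 0%N) => //=; rewrite ?andbF //.
apply/andP/eqP => [[? /eqP ?] | ?]; first lia.
by split; [|apply/eqP]; lia.
Qed.

Lemma Fcoef_plist f n k : (n <= f)%N ->
  Fcoef L J Q n k = \sum_(p <- plist f n k) weight Q p.
Proof.
move=> nf; rewrite (fsbig_seq _ _ (plist_uniq f n k)) /Fcoef.
have -> // : Paths L J Q n k = [set` plist f n k]%classic.
rewrite /Paths; apply/funext => p /=; apply/propext; rewrite mem_plist //.
split => [[-> [-> ->]]|/and3P[? /eqP ? /eqP ?]] //; by rewrite !eqxx.
Qed.

Lemma Fcoef0 k : Fcoef L J Q 0 k = (k == 0%N)%:R.
Proof.
rewrite (Fcoef_plist 0) //= cats0 /base /=.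
by case: (k == 0%N); rewrite ?big_nil // big_cons big_nil addr0 /weight big_nil.
Qed.

Lemma FcoefS n k : Fcoef L J Q n.+1 k =
  \sum_(s <- steps k n.+1) (Q (step_l s) (step_j s))`_(step_r s) *
     Fcoef L J Q (n - step_r s) (next_level k s).
Proof.
rewrite (Fcoef_plist n.+1) //. rewrite [plist _ _ _]/=. rewrite big_allpairs_dep.
apply: eq_bigr => s _; rewrite (Fcoef_plist n) ?leq_subr // add1n subSS big_distrr.
by apply: eq_bigr => p _; rewrite /weight big_cons.
Qed.

Lemma Fsolves : solves L J Q (Fseries L J Q).
Proof.
move=> n k; rewrite /rhs /fps_add /fps_one /fps_mulx /Fseries.
case: n => [|n]; first by rewrite Fcoef0 addr0.
rewrite add0r FcoefS /steps big_filter big_mkcond /allsteps big_allpairs big_allpairs.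
rewrite /fps_sum2 big_mkord; apply: eq_bigr => l _.
rewrite big_mkord; apply: eq_bigr => j _.
rewrite /fps_mulpoly big_mkord; apply: eq_bigr => i _.
rewrite /fps_mulu /fps_Delta /step_allowed /step_l /step_j /step_r /next_level /=.
have lL : (l <= L)%N by rewrite -ltnS ltn_ord.
have jJ : (j <= J)%N by rewrite -ltnS ltn_ord.
case: (leqP j k) => jk.
  rewrite leq_min jk jJ lL /=.
  case: eqP => [->|_]; rewrite ?mul0r //.
  congr (_ * Fcoef _ _ _ _ _); rewrite /step_l /step_j /=; lia.
by case: ifP => [/and3P[_ h _]|_]; [lia | rewrite mulr0].
Qed.
End Proof.

Theorem lemma1 (R : numDomainType) (L J : nat) (Q : nat -> nat -> {poly R}) :
  (forall l j i, (l <= L)%N -> (j <= J)%N -> 0 <= (Q l j)`_i) ->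
  solves L J Q (Fseries L J Q) /\
  (forall G : fps2 R, solves L J Q G -> forall n k, G n k = Fseries L J Q n k).
Proof.
move=> _; split; first exact: Fsolves.
move=> G HG n; elim/ltn_ind: n => n IH k.
rewrite HG Fsolves /rhs /fps_add /fps_mulx; case: n IH => [|n] IH //.
congr (_ + _); rewrite /fps_sum2; apply: eq_bigr => l _; apply: eq_bigr => j _.
rewrite /fps_mulpoly; apply: eq_bigr => i _; rewrite /fps_mulu /fps_Delta.
case: ifP => // _; rewrite IH //; lia.
Qed.
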